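(* For every integer $m\geq 2$ and every integer $n\geq 2$, the graph $mL_n$ (the disjoint union of $m$ copies of the ladder $L_n$) is $C_4$-supermagic.
   Context: All graphs are finite and simple. For a graph $H$, a graph $G=(V,E)$ has an $H$-covering if every edge of $G$ belongs to a subgraph of $G$ isomorphic to $H$. For such $G$, an $H$-magic labeling is a bijection $\lambda: V\cup E\to\{1,2,\dots,|V|+|E|\}$ for which there is a constant $c$ such that for every subgraph $H'=(V',E')$ of $G$ isomorphic to $H$, $\sum_{v\in V'}\lambda(v)+\sum_{e\in E'}\lambda(e)=c$. It is $H$-supermagic if moreover $\{\lambda(v):v\in V\}=\{1,\dots,|V|\}$; $G$ is $H$-supermagic if it admits such a labeling. $C_k$ is the cycle of length $k$. $mG$ denotes the disjoint union of $m$ copies of $G$. The ladder $L_n=P_n\times P_2$ ($n\ge2$) has vertices $u_i,v_i$ ($1\le i\le n$) and edges $u_iv_i$ ($1\le i\le n$), $u_iu_{i+1}$ and $v_iv_{i+1}$ ($1\le i\le n-1$). *)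

(* Defs.v *)
From mathcomp Require Import all_boot.
Set Implicit Arguments. Unset Strict Implicit. Unset Printing Implicit Defensive.

(* A simple graph is given by a finite vertex type V and an adjacency
   relation adj : rel V (assumed symmetric and irreflexive for the concrete
   graphs below). *)
Definition edges (V : finType) (adj : rel V) : {set {set V}} :=
  [set [set x; y] | x in V, y in V & adj x y].

Definition iso_subgraph (W : finType) (adjH : rel W) (V : finType) (adj : rel V)
  (V' : {set V}) (E' : {set {set V}}) : Prop :=
  exists f : W -> V,
    [/\ injective f,
        V' = f @: [set: W],
        E' = [set [set f x; f y] | x in W, y in W & adjH x y]
      & E' \subset edges adj].

Definition H_covering (W : finType) (adjH : rel W) (V : finType) (adj : rel V) : Prop :=
  forall e, e \in edges adj ->
    exists V' E', iso_subgraph adjH adj V' E' /\ e \in E'.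

Definition elems (V : finType) (adj : rel V) : {set V + {set V}} :=
  [set inl v | v : V] :|: [set inr e | e in edges adj].

Definition total_labeling (V : finType) (adj : rel V) (lam : V + {set V} -> nat) : Prop :=
  {in elems adj &, injective lam} /\
  (forall x, x \in elems adj -> 1 <= lam x <= #|V| + #|edges adj|).

Definition H_magic_labeling (W : finType) (adjH : rel W) (V : finType) (adj : rel V)
  (lam : V + {set V} -> nat) : Prop :=
  total_labeling adj lam /\
  exists c : nat, forall V' E', iso_subgraph adjH adj V' E' ->
    \sum_(v in V') lam (inl v) + \sum_(e in E') lam (inr e) = c.

Definition H_supermagic_labeling (W : finType) (adjH : rel W) (V : finType) (adj : rel V)
  (lam : V + {set V} -> nat) : Prop :=
  H_magic_labeling adjH adj lam /\
  [seq lam (inl v) | v <- enum V] =i iota 1 #|V|.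

Definition H_supermagic (W : finType) (adjH : rel W) (V : finType) (adj : rel V) : Prop :=
  H_covering adjH adj /\ exists lam, H_supermagic_labeling adjH adj lam.

Definition cycle_adj (k : nat) : rel 'I_k :=
  fun i j => (val j == (val i).+1 %% k) || (val i == (val j).+1 %% k).

(* The ladder L_n = P_n x P_2 on 'I_n * bool: (i,false) = u_{i+1},
   (i,true) = v_{i+1}. *)
Definition ladder_adj (n : nat) : rel ('I_n * bool) :=
  fun x y => ((val x.1 == val y.1) && (x.2 != y.2)) ||
             ((x.2 == y.2) && (((val x.1).+1 == val y.1) || ((val y.1).+1 == val x.1))).

Definition copies_adj (m : nat) (V : finType) (adj : rel V) : rel ('I_m * V) :=
  fun x y => (x.1 == y.1) && adj x.2 y.2.

(* Main.v *)
Require Import Defs.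
From mathcomp Require Import all_boot zify.
Set Implicit Arguments. Unset Strict Implicit. Unset Printing Implicit Defensive.

Definition VT (m n : nat) := ('I_m * ('I_n * bool))%type.
Definition G m n : rel (VT m n) := @copies_adj m _ (@ladder_adj n).

Definition sv m n (x : VT m n) : nat := x.1 + m * x.2.1.
Definition lamv m n (x : VT m n) : nat :=
  if x.2.2 then 2*(m*n) - sv x else (sv x).+1.
Definition gE m n (x y : VT m n) : nat :=
  if (x.1 : nat) == y.1 then
    if [&& (x.2.1 : nat) == y.2.1, ~~ x.2.2 & y.2.2] then 2*(m*n) + (sv x).+1
    else if (x.2.2 == y.2.2) && ((x.2.1 : nat).+1 == y.2.1) then
      (if x.2.2 then 3*(m*n) + 2*(m*(n-1)) - sv x else 3*(m*n) + m*(n-1) - sv x)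
    else 0
  else 0.
Definition lame m n (e : {set VT m n}) := \sum_(x in e) \sum_(y in e) gE x y.
Definition lam m n (z : VT m n + {set VT m n}) :=
  match z with inl x => lamv x | inr e => lame e end.

Lemma veqE m n (x y : VT m n) :
  (x == y) = [&& (x.1 : nat) == y.1, (x.2.1 : nat) == y.2.1 & x.2.2 == y.2.2].
Proof. by case: x => j [i b]; case: y => j' [i' b']. Qed.

Lemma Gadj m n (x y : VT m n) : G x y =
  ((x.1 : nat) == y.1) && (((x.2.1 : nat) == y.2.1) && (x.2.2 != y.2.2) ||
    (x.2.2 == y.2.2) && (((x.2.1 : nat).+1 == y.2.1) || ((y.2.1 : nat).+1 == x.2.1))).
Proof. by []. Qed.

Lemma sv_inj m n (x y : VT m n) : sv x = sv y -> (x.1 : nat) = y.1 /\ (x.2.1 : nat) = y.2.1.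
Proof.
rewrite /sv => E.
have hx := ltn_ord x.1; have hy := ltn_ord y.1.
have m0 : 0 < m by lia.
have e1 : (x.1 + m * x.2.1) %% m = x.1 by rewrite mulnC addnC modnMDl modn_small.
have e2 : (y.1 + m * y.2.1) %% m = y.1 by rewrite mulnC addnC modnMDl modn_small.
have e3 : (x.1 + m * x.2.1) %/ m = x.2.1 by rewrite mulnC addnC divnMDl // divn_small // addn0.
have e4 : (y.1 + m * y.2.1) %/ m = y.2.1 by rewrite mulnC addnC divnMDl // divn_small // addn0.
by split; [rewrite -e1 E e2 | rewrite -e3 E e4].
Qed.

Lemma sv_lt m n (x : VT m n) : sv x < m * n.
Proof.
rewrite /sv; case: x => [[j hj] [[i hi] b]] /=.
apply: (@leq_trans (m + m * i)); first by rewrite ltn_add2r.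
by rewrite -mulnS leq_mul2l hi orbT.
Qed.

Lemma sv_ltQ m n (x : VT m n) : (x.2.1 : nat).+1 < n -> sv x < m * (n - 1).
Proof.
rewrite /sv; case: x => [[j hj] [[i hi] b]] /= hin.
apply: (@leq_trans (m + m * i)); first by rewrite ltn_add2r.
rewrite -mulnS leq_mul2l; apply/orP; right; lia.
Qed.

Definition set4 (T : finType) (a b c d : T) : {set T} := a |: (b |: (c |: [set d])).

Lemma card4 (T : finType) (a b c d : T) : #|set4 a b c d| <= 4.
Proof. rewrite /set4 !cardsU1 cards1. lia. Qed.

Lemma card4E (T : finType) (a b c d : T) :
  [&& a != b, a != c, a != d, b != c, b != d & c != d] -> #|set4 a b c d| = 4.
Proof.
move=> H. rewrite /set4 !cardsU1 cards1 !inE.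
case/and5P: H => /negPf -> /negPf -> /negPf -> /negPf -> /andP[/negPf -> /negPf ->] //.
Qed.

Lemma sum4 (T : finType) (a b c d : T) (F : T -> nat) :
  [&& a != b, a != c, a != d, b != c, b != d & c != d] ->
  \sum_(x in set4 a b c d) F x = F a + F b + F c + F d.
Proof.
case/and5P=> ab ac ad bc /andP[bd cd]; rewrite /set4.
rewrite big_setU1 /=; last by rewrite !inE !negb_or ab ac ad.
rewrite big_setU1 /=; last by rewrite !inE !negb_or bc bd.
rewrite big_setU1 /=; last by rewrite !inE cd.
by rewrite big_set1 !addnA.
Qed.

Lemma gExx m n (x : VT m n) : gE x x = 0.
Proof. rewrite /gE; repeat case: ifP => //; lia. Qed.

Lemma lame2 m n (x y : VT m n) : x != y -> lame [set x; y] = gE x y + gE y x.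
Proof.
move=> xy; rewrite /lame big_setU1 /= ?big_set1; last by rewrite !inE.
rewrite !big_setU1 /= ?big_set1 ?inE // !gExx. lia.
Qed.

Definition canon m n (x y : VT m n) : bool :=
 ((x.1:nat) == y.1) && ([&& (x.2.1:nat) == y.2.1, ~~x.2.2 & y.2.2] ||
   (x.2.2 == y.2.2) && ((x.2.1:nat).+1 == y.2.1)).

Lemma canon_neq m n (x y : VT m n) : canon x y -> x != y.
Proof. rewrite veqE /canon; lia. Qed.

Lemma adj_canon m n (x y : VT m n) : G x y -> canon x y \/ canon y x.
Proof. rewrite Gadj /canon; lia. Qed.

Lemma canon_adj m n (x y : VT m n) : canon x y -> G x y.
Proof. rewrite Gadj /canon; lia. Qed.

Lemma gE_rev m n (x y : VT m n) : canon x y -> gE y x = 0.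
Proof. rewrite /canon /gE => H; repeat case: ifP => //; lia. Qed.

Lemma lame_canon m n (x y : VT m n) : canon x y -> lame [set x; y] = gE x y.
Proof. by move=> H; rewrite lame2 ?canon_neq // (gE_rev H) addn0. Qed.

Lemma edgesP m n (e : {set VT m n}) :
  e \in edges (@G m n) <-> exists x y, G x y /\ e = [set x; y].
Proof.
split.
  by case/imset2P => x y _; rewrite inE => /andP[_ H] ->; exists x, y.
by case=> x [y [H ->]]; apply/imset2P; exists x y => //; rewrite inE.
Qed.

Lemma canon_edge m n (x y : VT m n) : canon x y -> [set x; y] \in edges (@G m n).
Proof. by move=> H; apply/edgesP; exists x, y; split => //; apply: canon_adj. Qed.

Lemma edge_canon m n (e : {set VT m n}) : e \in edges (@G m n) ->
  exists x y, canon x y /\ e = [set x; y].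
Proof.
case/edgesP=> x [y [/adj_canon [H|H] ->]]; first by exists x, y.
by exists y, x; split => //; rewrite setUC.
Qed.

Lemma edge_adj m n (x y : VT m n) : [set x; y] \in edges (@G m n) -> G x y.
Proof.
case/edgesP=> x' [y' [H E]].
have h1 : x \in [set x'; y'] by rewrite -E !inE eqxx.
have h2 : y \in [set x'; y'] by rewrite -E !inE eqxx orbT.
have h3 : x' \in [set x; y] by rewrite E !inE eqxx.
have h4 : y' \in [set x; y] by rewrite E !inE eqxx orbT.
move: H h1 h2 h3 h4; rewrite !inE !veqE !Gadj. lia.
Qed.

Lemma gE_range m n (x y : VT m n) : canon x y ->
  2*(m*n) < gE x y <= 3*(m*n) + 2*(m*(n-1)).
Proof.
move=> H.
have h1 := sv_lt x.
have h2 : (x.2.1 : nat).+1 < n -> sv x < m * (n - 1) by apply: sv_ltQ.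
have h3 := ltn_ord y.2.1.
move: H; rewrite /canon /gE => H; repeat case: ifP => //; lia.
Qed.

Lemma gE_inj m n (x1 y1 x2 y2 : VT m n) : canon x1 y1 -> canon x2 y2 ->
  gE x1 y1 = gE x2 y2 -> x1 = x2 /\ y1 = y2.
Proof.
move=> H1 H2 E.
have a1 := sv_lt x1. have a2 := sv_lt x2.
have b1 : (x1.2.1 : nat).+1 < n -> sv x1 < m * (n - 1) by apply: sv_ltQ.
have b2 : (x2.2.1 : nat).+1 < n -> sv x2 < m * (n - 1) by apply: sv_ltQ.
have c1 := ltn_ord y1.2.1. have c2 := ltn_ord y2.2.1.
have [Es Eb] : sv x1 = sv x2 /\ x1.2.2 = x2.2.2.
  move: H1 H2 E; rewrite /canon /gE => H1 H2; repeat case: ifP => //; lia.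
have [d1 d2] := sv_inj Es.
have hx : x1 = x2 by apply/eqP; rewrite veqE; lia.
split => //; apply/eqP; rewrite veqE.
move: H1 H2 E; rewrite /canon /gE hx => H1 H2; repeat case: ifP => //; lia.
Qed.


Definition vA m n (j : 'I_m) i (hi : i.+1 < n) : VT m n := (j, (Ordinal (ltnW hi), false)).
Definition vB m n (j : 'I_m) i (hi : i.+1 < n) : VT m n := (j, (Ordinal hi, false)).
Definition vC m n (j : 'I_m) i (hi : i.+1 < n) : VT m n := (j, (Ordinal hi, true)).
Definition vD m n (j : 'I_m) i (hi : i.+1 < n) : VT m n := (j, (Ordinal (ltnW hi), true)).
Definition SqV m n (j : 'I_m) i (hi : i.+1 < n) :=
  set4 (vA j hi) (vB j hi) (vC j hi) (vD j hi).
Definition SqE m n (j : 'I_m) i (hi : i.+1 < n) :=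
  set4 [set vA j hi; vD j hi] [set vB j hi; vC j hi] [set vA j hi; vB j hi] [set vD j hi; vC j hi].

Lemma inSqV m n (j : 'I_m) i (hi : i.+1 < n) x :
  (x \in SqV j hi) = ((x.1 : nat) == j) && (((x.2.1 : nat) == i) || ((x.2.1 : nat) == i.+1)).
Proof. rewrite /SqV /set4 !inE !veqE /=; lia. Qed.

Lemma sq_edge m n (j : 'I_m) i (hi : i.+1 < n) x y :
  x \in SqV j hi -> y \in SqV j hi -> G x y -> [set x; y] \in SqE j hi.
Proof.
rewrite /SqV /set4 !inE.
move=> /orP[/eqP->|/orP[/eqP->|/orP[/eqP->|/eqP->]]]
       /orP[/eqP->|/orP[/eqP->|/orP[/eqP->|/eqP->]]] => Hg;
  try (by rewrite ?inE eqxx /= ?orbT);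
  try (by rewrite setUC ?inE eqxx /= ?orbT);
  move: Hg; rewrite Gadj /=; lia.
Qed.

Lemma set2_neq (T : finType) (a b c d : T) :
  (a \notin [set c; d]) || (b \notin [set c; d]) -> [set a; b] != [set c; d].
Proof.
move=> H; apply/negP => /eqP E; move: H; rewrite -E !inE !eqxx ?orbT //.
Qed.

Lemma sumSqV m n (j : 'I_m) i (hi : i.+1 < n) :
  \sum_(v in SqV j hi) lamv v = 4 * (m * n) + 2.
Proof.
rewrite sum4; last by rewrite !veqE /=; lia.
have := sv_lt (vB j hi); have := sv_lt (vA j hi).
rewrite /lamv /sv /= !mulnS; lia.
Qed.

Lemma sumSqE m n (j : 'I_m) i (hi : i.+1 < n) :
  \sum_(e in SqE j hi) lame e = 10 * (m * n) + 3 * (m * (n - 1)) + m + 2.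
Proof.
rewrite sum4; last by rewrite !set2_neq // !inE !veqE /=; lia.
rewrite !lame_canon; try by rewrite /canon /=; lia.
have := sv_lt (vB j hi); have := @sv_ltQ _ _ (vA j hi) hi.
rewrite /gE /sv /= !mulnS; repeat case: ifP; lia.
Qed.

Definition o0 : 'I_4 := @Ordinal 4 0 isT.
Definition o1 : 'I_4 := @Ordinal 4 1 isT.
Definition o2 : 'I_4 := @Ordinal 4 2 isT.
Definition o3 : 'I_4 := @Ordinal 4 3 isT.

Lemma ord4 (k : 'I_4) : k = o0 \/ k = o1 \/ k = o2 \/ k = o3.
Proof.
case: k => [[|[|[|[|k]]]] hk]; try lia.
- by left; apply: val_inj.
- by right; left; apply: val_inj.
- by right; right; left; apply: val_inj.
- by right; right; right; apply: val_inj.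
Qed.

Lemma sqlem (i0 i1 i2 i3 n : nat) (b0 b1 b2 b3 : bool) :
 ((i0 == i1) && (b0 != b1) || (b0 == b1) && ((i0.+1 == i1) || (i1.+1 == i0))) ->
 ((i1 == i2) && (b1 != b2) || (b1 == b2) && ((i1.+1 == i2) || (i2.+1 == i1))) ->
 ((i2 == i3) && (b2 != b3) || (b2 == b3) && ((i2.+1 == i3) || (i3.+1 == i2))) ->
 ((i3 == i0) && (b3 != b0) || (b3 == b0) && ((i3.+1 == i0) || (i0.+1 == i3))) ->
 ~~ ((i0 == i1) && (b0 == b1)) ->
 ~~ ((i0 == i2) && (b0 == b2)) ->
 ~~ ((i0 == i3) && (b0 == b3)) ->
 ~~ ((i1 == i2) && (b1 == b2)) ->
 ~~ ((i1 == i3) && (b1 == b3)) ->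
 ~~ ((i2 == i3) && (b2 == b3)) ->
 i0 < n -> i1 < n -> i2 < n -> i3 < n ->
 let i := minn (minn i0 i1) (minn i2 i3) in
 [&& i.+1 < n, (i0 == i) || (i0 == i.+1), (i1 == i) || (i1 == i.+1), (i2 == i) || (i2 == i.+1) & (i3 == i) || (i3 == i.+1)].
Proof.
case: b0; case: b1; case: b2; case: b3 => /=; lia.
Qed.

Lemma c4_square m n (f : 'I_4 -> VT m n) : injective f ->
  (forall a b, cycle_adj a b -> G (f a) (f b)) ->
  exists (j : 'I_m) i (hi : i.+1 < n), forall k, f k \in SqV j hi.
Proof.
move=> finj H.
have g01 := H o0 o1 isT. have g12 := H o1 o2 isT.
have g23 := H o2 o3 isT. have g30 := H o3 o0 isT.
have d01 : f o0 != f o1 by rewrite (inj_eq finj).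
have d02 : f o0 != f o2 by rewrite (inj_eq finj).
have d03 : f o0 != f o3 by rewrite (inj_eq finj).
have d12 : f o1 != f o2 by rewrite (inj_eq finj).
have d13 : f o1 != f o3 by rewrite (inj_eq finj).
have d23 : f o2 != f o3 by rewrite (inj_eq finj).
have l0 := ltn_ord (f o0).2.1. have l1 := ltn_ord (f o1).2.1.
have l2 := ltn_ord (f o2).2.1. have l3 := ltn_ord (f o3).2.1.
move: g01 g12 g23 g30; rewrite !Gadj => /andP[/eqP j01 a01] /andP[/eqP j12 a12] /andP[/eqP j23 a23] /andP[_ a30].
have j02 : ((f o0).1 : nat) = (f o2).1 by rewrite j01 j12.
have j03 : ((f o0).1 : nat) = (f o3).1 by rewrite j02 j23.
have j13 : ((f o1).1 : nat) = (f o3).1 by rewrite j12 j23.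
have e01 := d01; rewrite veqE j01 eqxx /= in e01.
have e02 := d02; rewrite veqE j02 eqxx /= in e02.
have e03 := d03; rewrite veqE j03 eqxx /= in e03.
have e12 := d12; rewrite veqE j12 eqxx /= in e12.
have e13 := d13; rewrite veqE j13 eqxx /= in e13.
have e23 := d23; rewrite veqE j23 eqxx /= in e23.
case/and5P: (sqlem a01 a12 a23 a30 e01 e02 e03 e12 e13 e23 l0 l1 l2 l3) => hi h0 h1 h2 h3.
clear a01 a12 a23 a30 e01 e02 e03 e12 e13 e23 d01 d02 d03 d12 d13 d23 H.
exists (f o0).1, _, hi => k.
case: (ord4 k) => [->|[->|[->|->]]]; rewrite inSqV; [by rewrite eqxx h0 | by rewrite -j01 eqxx h1 | by rewrite -j02 eqxx h2 | by rewrite -j03 eqxx h3].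
Qed.

Lemma NQ m n : 0 < n -> m * n = m * (n - 1) + m.
Proof. by case: n => // n _; rewrite subn1 /= mulnS addnC. Qed.

Definition vs m n (s : nat) (b : bool) : VT m.+1 n.+1 :=
  (inord (s %% m.+1), (inord (s %/ m.+1), b)).

Lemma vs_comp m n s b : s < m.+1 * n.+1 ->
  [/\ ((vs m n s b).1 : nat) = s %% m.+1, ((vs m n s b).2.1 : nat) = s %/ m.+1,
      (vs m n s b).2.2 = b & sv (vs m n s b) = s].
Proof.
move=> hs.
have h1 : s %% m.+1 < m.+1 by rewrite ltn_mod.
have h2 : s %/ m.+1 < n.+1 by rewrite ltn_divLR // mulnC.
rewrite /sv /vs /= !inordK //; split => //.
by rewrite [in RHS](divn_eq s m.+1) addnC mulnC.
Qed.

Lemma vs_next m n s b : s + m.+1 < m.+1 * n.+1 ->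
  ((vs m n (s + m.+1) b).1 : nat) = (vs m n s b).1 /\
  ((vs m n (s + m.+1) b).2.1 : nat) = ((vs m n s b).2.1).+1.
Proof.
move=> hs.
have hs' : s < m.+1 * n.+1 by lia.
case: (vs_comp b hs) => -> -> _ _.
case: (vs_comp b hs) => _ _ _ _.
case: (vs_comp b hs') => -> -> _ _.
split; first by rewrite modnDr.
by rewrite addnC -{1}(mul1n m.+1) divnMDl // addnC addn1.
Qed.

Lemma gE_val m n (x y : VT m n) : canon x y -> gE x y =
  if (x.2.1 : nat) == y.2.1 then 2*(m*n) + (sv x).+1
  else if x.2.2 then 3*(m*n) + 2*(m*(n-1)) - sv x else 3*(m*n) + m*(n-1) - sv x.
Proof. rewrite /canon /gE => H; repeat case: ifP => //; lia. Qed.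

Definition decv m n (k : nat) : VT m.+1 n.+1 :=
  if k <= m.+1 * n.+1 then vs m n k.-1 false else vs m n (2 * (m.+1 * n.+1) - k) true.

Lemma lamv_decv m n k : 1 <= k <= 2 * (m.+1 * n.+1) -> lamv (decv m n k) = k.
Proof.
move=> hk; rewrite /decv; case: ifP => hk'; rewrite /lamv.
  have hs : k.-1 < m.+1 * n.+1 by lia.
  case: (vs_comp false hs) => _ _ -> -> /=; lia.
have hs : 2 * (m.+1 * n.+1) - k < m.+1 * n.+1 by lia.
case: (vs_comp true hs) => _ _ -> -> /=; lia.
Qed.

Definition dec m n (k : nat) : {set VT m.+1 n.+1} :=
  let N := m.+1 * n.+1 in let Q := m.+1 * (n.+1 - 1) in
  if k < N then [set vs m n k false; vs m n k true]
  else if k < N + Q then [set vs m n (N + Q - 1 - k) false; vs m n (N + Q - 1 - k + m.+1) false]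
  else [set vs m n (N + 2 * Q - 1 - k) true; vs m n (N + 2 * Q - 1 - k + m.+1) true].

Lemma dec_ok m n k : k < m.+1 * n.+1 + 2 * (m.+1 * (n.+1 - 1)) ->
  dec m n k \in edges (@G m.+1 n.+1) /\ lame (dec m n k) = 2 * (m.+1 * n.+1) + k.+1.
Proof.
move=> hk.
have hNQ := @NQ m.+1 n.+1 isT.
rewrite /dec; case: ifP => h1.
  have [c1 c2 c3 c4] := vs_comp false h1.
  have [d1 d2 d3 d4] := vs_comp true h1.
  have hc : canon (vs m n k false) (vs m n k true) by rewrite /canon ?c1 ?c2 ?c3 ?d1 ?d2 ?d3; lia.
  split; first exact: canon_edge.
  by rewrite lame_canon // gE_val // ?c2 ?d2 eqxx c4.
case: ifP => h2.
  set s := _ - 1 - k.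
  have hs : s + m.+1 < m.+1 * n.+1 by rewrite /s; lia.
  have hs' : s < m.+1 * n.+1 by lia.
  have [c1 c2 c3 c4] := vs_comp false hs'.
  have [d1 d2 d3 d4] := vs_comp false hs.
  have [e1 e2] := vs_next false hs.
  have hc : canon (vs m n s false) (vs m n (s + m.+1) false).
    by rewrite /canon e1 e2 ?c3 ?d3; lia.
  split; first exact: canon_edge.
  rewrite lame_canon // gE_val // e2 ?c3 c4 eqn_leq ltnn andbF /s; lia.
set s := _ - 1 - k.
have hs : s + m.+1 < m.+1 * n.+1 by rewrite /s; lia.
have hs' : s < m.+1 * n.+1 by lia.
have [c1 c2 c3 c4] := vs_comp true hs'.
have [d1 d2 d3 d4] := vs_comp true hs.
have [e1 e2] := vs_next true hs.
have hc : canon (vs m n s true) (vs m n (s + m.+1) true).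
  by rewrite /canon e1 e2 ?c3 ?d3; lia.
split; first exact: canon_edge.
rewrite lame_canon // gE_val // e2 ?c3 c4 eqn_leq ltnn andbF /s; lia.
Qed.

Lemma edges_card m n :
  m.+1 * n.+1 + 2 * (m.+1 * (n.+1 - 1)) <= #|edges (@G m.+1 n.+1)|.
Proof.
set K := _ + _.
pose d (k : 'I_K) := dec m n k.
have dinj : injective d.
  move=> k1 k2 E; apply: val_inj.
  have [_ l1] := dec_ok (ltn_ord k1).
  have [_ l2] := dec_ok (ltn_ord k2).
  by move: l1 l2; rewrite /d in E; rewrite E => -> /= /eqP; rewrite eqn_add2l eqSS => /eqP.
have <- : #|d @: [set: 'I_K]| = K by rewrite card_imset // cardsT card_ord.
apply: subset_leq_card; apply/subsetP => e /imsetP [k _ ->].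
by case: (dec_ok (ltn_ord k)).
Qed.

Definition sqf m n (j : 'I_m) i (hi : i.+1 < n) (k : 'I_4) : VT m n :=
  if (k : nat) == 0 then vA j hi else if (k : nat) == 1 then vB j hi
  else if (k : nat) == 2 then vC j hi else vD j hi.

Lemma sqf_inj m n (j : 'I_m) i (hi : i.+1 < n) : injective (sqf j hi).
Proof.
move=> k1 k2; case: (ord4 k1) => [->|[->|[->|->]]]; case: (ord4 k2) => [->|[->|[->|->]]] => //;
  move/eqP; rewrite veqE /=; lia.
Qed.

Lemma sqf_iso m n (j : 'I_m) i (hi : i.+1 < n) :
  iso_subgraph (@cycle_adj 4) (@G m n) (sqf j hi @: [set: 'I_4])
    [set [set sqf j hi x; sqf j hi y] | x in 'I_4, y in 'I_4 & cycle_adj x y].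
Proof.
exists (sqf j hi); split => //; first exact: sqf_inj.
apply/subsetP => e /imset2P [x y _]; rewrite inE => /andP[_ hxy] ->.
apply/edgesP; exists (sqf j hi x), (sqf j hi y); split => //.
move: hxy; case: (ord4 x) => [->|[->|[->|->]]]; case: (ord4 y) => [->|[->|[->|->]]] => //= _;
  rewrite Gadj /=; lia.
Qed.

Lemma cover_ok m n (hn : 1 < n) : H_covering (@cycle_adj 4) (@G m n).
Proof.
move=> e /edge_canon [x [y [hc ->]]].
have hj : (x.1 : nat) = y.1 by move: hc; rewrite /canon; lia.
have hy := ltn_ord y.2.1. have hx := ltn_ord x.2.1.
have [hr|hl] : [&& (x.2.1:nat) == y.2.1, ~~ x.2.2 & y.2.2] \/
   ((x.2.2 == y.2.2) && ((x.2.1:nat).+1 == y.2.1)) by move: hc; rewrite /canon; lia.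
- case: (boolP ((x.2.1 : nat).+1 < n)) => hi.
    exists (sqf x.1 hi @: [set: 'I_4]), [set [set sqf x.1 hi a; sqf x.1 hi b] | a in 'I_4, b in 'I_4 & cycle_adj a b].
    split; first exact: sqf_iso.
    apply/imset2P; exists o0 o3 => //; first by rewrite inE.
    by congr [set _; _]; apply/eqP; rewrite veqE /=; lia.
  have hi' : ((x.2.1 : nat).-1).+1 < n by lia.
  exists (sqf x.1 hi' @: [set: 'I_4]), [set [set sqf x.1 hi' a; sqf x.1 hi' b] | a in 'I_4, b in 'I_4 & cycle_adj a b].
  split; first exact: sqf_iso.
  apply/imset2P; exists o1 o2 => //; first by rewrite inE.
  by congr [set _; _]; apply/eqP; rewrite veqE /=; lia.
- have hi : (x.2.1 : nat).+1 < n by lia.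
  exists (sqf x.1 hi @: [set: 'I_4]), [set [set sqf x.1 hi a; sqf x.1 hi b] | a in 'I_4, b in 'I_4 & cycle_adj a b].
  split; first exact: sqf_iso.
  case hb: x.2.2.
    apply/imset2P; exists o3 o2 => //; first by rewrite inE.
    by congr [set _; _]; apply/eqP; rewrite veqE /=; lia.
  apply/imset2P; exists o0 o1 => //; first by rewrite inE.
  by congr [set _; _]; apply/eqP; rewrite veqE /=; lia.
Qed.

Lemma lamv_range m n (x : VT m n) : 1 <= lamv x <= 2 * (m * n).
Proof. have := sv_lt x; rewrite /lamv; case: x.2.2; lia. Qed.

Lemma lamv_inj m n (x y : VT m n) : lamv x = lamv y -> x = y.
Proof.
move=> E; have h1 := sv_lt x; have h2 := sv_lt y.
have [s1 s2] : sv x = sv y /\ x.2.2 = y.2.2.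
  by move: E; rewrite /lamv; case: x.2.2; case: y.2.2; lia.
have [d1 d2] := sv_inj s1.
by apply/eqP; rewrite veqE; lia.
Qed.

Lemma lame_range m n (e : {set VT m n}) : e \in edges (@G m n) ->
  2 * (m * n) < lame e <= 3 * (m * n) + 2 * (m * (n - 1)).
Proof. by case/edge_canon => x [y [hc ->]]; rewrite lame_canon //; apply: gE_range. Qed.

Lemma lame_inj m n (e1 e2 : {set VT m n}) : e1 \in edges (@G m n) -> e2 \in edges (@G m n) ->
  lame e1 = lame e2 -> e1 = e2.
Proof.
case/edge_canon => x1 [y1 [h1 ->]]; case/edge_canon => x2 [y2 [h2 ->]].
rewrite !lame_canon // => E; by case: (gE_inj h1 h2 E) => -> ->.
Qed.

Theorem theorem3 (m n : nat) (hm : 2 <= m) (hn : 2 <= n) :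
  @H_supermagic _ (@cycle_adj 4) _ (@copies_adj m _ (@ladder_adj n)).
Proof.
split; first exact: (@cover_ok m n hn).
case: m hm => [|m] // _; case: n hn => [|n] // hn.
have cardV : #|{: 'I_m.+1 * ('I_n.+1 * bool)}| = 2 * (m.+1 * n.+1).
  by rewrite !card_prod !card_ord card_bool; lia.
have hE : m.+1 * n.+1 + 2 * (m.+1 * (n.+1 - 1)) <= #|edges (@copies_adj m.+1 _ (@ladder_adj n.+1))| := @edges_card m n.
have hNQ := @NQ m.+1 n.+1 isT.
exists (@lam m.+1 n.+1); split; [split; [split|] | ].
- move=> z1 z2; rewrite /elems !inE.
  move=> /orP[/imsetP[v1 _ ->]|/imsetP[e1 he1 ->]] /orP[/imsetP[v2 _ ->]|/imsetP[e2 he2 ->]] /= Ez.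
  + by rewrite (lamv_inj Ez).
  + have := lamv_range v1; have := lame_range he2; lia.
  + have := lamv_range v2; have := lame_range he1; lia.
  + by rewrite (lame_inj he1 he2 Ez).
- move=> z; rewrite /elems !inE => /orP[/imsetP[v _ ->]|/imsetP[e he ->]] /=; rewrite cardV.
  + have := lamv_range v; lia.
  + have := lame_range he; set K := #|edges _| in hE *; lia.
- exists (4 * (m.+1 * n.+1) + 2 + (10 * (m.+1 * n.+1) + 3 * (m.+1 * (n.+1 - 1)) + m.+1 + 2)).
  move=> V' E' [f [finj hV hE' hsub]].
  have Hadj : forall a b, cycle_adj a b -> G (f a) (f b).
    move=> a b hab; apply: edge_adj; apply: (subsetP hsub); rewrite hE'.
    by apply/imset2P; exists a b => //; rewrite inE.
  have [j [i [hi hk]]] := c4_square finj Hadj.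
  have eV : V' = SqV j hi.
    apply/eqP; rewrite eqEcard; apply/andP; split.
      by rewrite hV; apply/subsetP => v /imsetP [k _ ->]; exact: hk.
    by rewrite hV card_imset // cardsT card_ord card4.
  have eE : E' = SqE j hi.
    apply/eqP; rewrite eqEcard; apply/andP; split.
      rewrite hE'; apply/subsetP => e /imset2P [a b _]; rewrite inE => /andP[_ hab] ->.
      exact: sq_edge (hk a) (hk b) (Hadj a b hab).
    apply: (leq_trans (card4 _ _ _ _)).
    have <- : #|set4 [set f o0; f o1] [set f o1; f o2] [set f o2; f o3] [set f o3; f o0]| = 4.
      apply: card4E; rewrite !set2_neq // !inE !(inj_eq finj) //.
    apply: subset_leq_card; apply/subsetP => e; rewrite /set4 !inE hE'.
    by move=> /orP[/eqP->|/orP[/eqP->|/orP[/eqP->|/eqP->]]];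
      apply/imset2P; [exists o0 o1 | exists o1 o2 | exists o2 o3 | exists o3 o0] => //; rewrite inE.
  rewrite eV eE.
  have -> : \sum_(v in SqV j hi) lam (inl v) = \sum_(v in SqV j hi) lamv v by [].
  have -> : \sum_(e in SqE j hi) lam (inr e) = \sum_(e in SqE j hi) lame e by [].
  by rewrite sumSqV sumSqE.
- move=> k; rewrite mem_iota cardV.
  case: (boolP (1 <= k < 1 + 2 * (m.+1 * n.+1))) => H.
    apply/mapP; exists (decv m n k); first by rewrite mem_enum.
    by rewrite /= lamv_decv //; lia.
  apply/mapP => [[v _ Ev]]; move: H; rewrite Ev /=; have := lamv_range v; lia.
Qed.
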